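(* Let $P,Q\subseteq M_{\mathbb R}$ be lattice polytopes such that $P+Q$ is a reflexive polytope with respect to some lattice point. Let $p\in P$ be a lattice point, $L:=\mathrm{lin}(P-p)$, and $\pi:M_{\mathbb R}\to M_{\mathbb R}/L$ the projection. Then $\pi(P+Q)$ is a reflexive polytope with respect to the lattice $\pi(M)$ (with respect to some lattice point).
   Context: $M\cong\mathbb Z^d$, $N$ its dual lattice. A lattice polytope $\Delta$ is reflexive with respect to a lattice point $m$ if $m$ lies in the interior of $\Delta$ and $\{y:\langle x,y\rangle\ge-1\ \forall x\in\Delta-m\}$ is a lattice polytope. (If $\dim P=\dim(P+Q)$ the image is a point, regarded as a $0$-dimensional reflexive polytope.) *)

(* Defs.v *)
From HB Require Import structures.
From mathcomp Require Import all_boot all_order all_algebra.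
From mathcomp Require Import all_classical all_reals all_analysis.
Set Implicit Arguments. Unset Strict Implicit. Unset Printing Implicit Defensive.
Import Order.TTheory GRing.Theory Num.Theory.
Import numFieldNormedType.Exports.
Local Open Scope classical_set_scope.
Local Open Scope ring_scope.

(* M_R = R^d, realised as row vectors 'rV[R]_d; the dual N_R is identified
   with 'rV[R]_d through the standard pairing below. *)

Definition pairing (R : realType) (n : nat) (x y : 'rV[R]_n) : R :=
  (x *m y^T) 0 0.

Definition Zlattice (R : realType) (n : nat) : set 'rV[R]_n :=
  [set x | exists z : 'rV[int]_n, x = map_mx (fun k : int => k%:~R) z].

Definition dual_lattice (R : realType) (n : nat) (Lam : set 'rV[R]_n)
  : set 'rV[R]_n :=
  [set y | forall l, Lam l -> exists k : int, pairing l y = k%:~R].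

Definition conv_hull (R : realType) (n : nat) (s : seq 'rV[R]_n) : set 'rV[R]_n :=
  [set x | exists w : 'I_(size s) -> R,
     (forall i, 0 <= w i) /\ \sum_i w i = 1 /\
     x = \sum_i w i *: s`_i].

Definition lattice_polytope (R : realType) (n : nat) (Lam : set 'rV[R]_n)
  (D : set 'rV[R]_n) : Prop :=
  exists s : seq 'rV[R]_n, (forall v, v \in s -> Lam v) /\ D = conv_hull s.

Definition minkowski_sum (R : realType) (n : nat) (A B : set 'rV[R]_n) : set 'rV[R]_n :=
  [set z | exists x y, A x /\ B y /\ z = x + y].

Definition lin_span (R : realType) (n : nat) (S : set 'rV[R]_n) : set 'rV[R]_n :=
  [set x | exists (k : nat) (c : 'I_k -> R) (v : 'I_k -> 'rV[R]_n),
     (forall i, S (v i)) /\ x = \sum_i c i *: v i].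

Definition translate (R : realType) (n : nat) (S : set 'rV[R]_n) (p : 'rV[R]_n)
  : set 'rV[R]_n := [set x - p | x in S].

Definition polar_at (R : realType) (n : nat) (D : set 'rV[R]_n) (m : 'rV[R]_n)
  : set 'rV[R]_n :=
  [set y | forall x, D x -> -1 <= pairing (x - m) y].

Definition reflexive_wrt (R : realType) (n : nat) (Lam : set 'rV[R]_n)
  (D : set 'rV[R]_n) (m : 'rV[R]_n) : Prop :=
  [/\ lattice_polytope Lam D, Lam m, (interior D) m &
      lattice_polytope (dual_lattice Lam) (polar_at D m)].

Definition lin_image (R : realType) (d n : nat) (A : 'M[R]_(d, n))
  (S : set 'rV[R]_d) : set 'rV[R]_n := [set x *m A | x in S].

(* Main.v *)
Require Import Defs.
From HB Require Import structures.
From mathcomp Require Import all_boot all_order all_algebra.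
From mathcomp Require Import all_classical all_reals all_analysis.
From Stdlib Require Import Classical.
From mathcomp Require Import ring lra.
Import Order.TTheory GRing.Theory Num.Theory.
Local Open Scope classical_set_scope.
Local Open Scope ring_scope.
Set Implicit Arguments. Unset Strict Implicit. Unset Printing Implicit Defensive.

Section Pair.
Variable R : realType.
Variable n : nat.
Implicit Types x y z : 'rV[R]_n.

Lemma pairingE x y : pairing x y = \sum_i x 0 i * y 0 i.
Proof. by rewrite /pairing mxE; apply: eq_bigr => i _; rewrite mxE. Qed.

Lemma pairingC x y : pairing x y = pairing y x.
Proof. by rewrite !pairingE; apply: eq_bigr => i _; rewrite mulrC. Qed.

Lemma pairingDl x y z : pairing (x + y) z = pairing x z + pairing y z.
Proof. by rewrite !pairingE -big_split; apply: eq_bigr => i _; rewrite mxE mulrDl. Qed.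

Lemma pairingZl (a : R) x z : pairing (a *: x) z = a * pairing x z.
Proof. by rewrite !pairingE mulr_sumr; apply: eq_bigr => i _; rewrite mxE mulrA. Qed.

Lemma pairingNl x z : pairing (- x) z = - pairing x z.
Proof. by rewrite -scaleN1r pairingZl mulN1r. Qed.

Lemma pairingBl x y z : pairing (x - y) z = pairing x z - pairing y z.
Proof. by rewrite pairingDl pairingNl. Qed.

Lemma pairing0l z : pairing 0 z = 0.
Proof. by rewrite pairingE big1 // => i _; rewrite mxE mul0r. Qed.

Lemma pairingDr x y z : pairing z (x + y) = pairing z x + pairing z y.
Proof. by rewrite !(pairingC z) pairingDl. Qed.
Lemma pairingZr (a : R) x z : pairing z (a *: x) = a * pairing z x.
Proof. by rewrite !(pairingC z) pairingZl. Qed.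
Lemma pairingNr x z : pairing z (- x) = - pairing z x.
Proof. by rewrite !(pairingC z) pairingNl. Qed.
Lemma pairingBr x y z : pairing z (x - y) = pairing z x - pairing z y.
Proof. by rewrite !(pairingC z) pairingBl. Qed.
Lemma pairing0r z : pairing z 0 = 0.
Proof. by rewrite pairingC pairing0l. Qed.

Lemma pairing_suml (I : Type) (r : seq I) (P : pred I) (F : I -> 'rV[R]_n) z :
  pairing (\sum_(i <- r | P i) F i) z = \sum_(i <- r | P i) pairing (F i) z.
Proof.
elim/big_rec2: _ => [|i a b _ <-]; first exact: pairing0l.
by rewrite pairingDl.
Qed.

Lemma pairing_self_eq0 x : pairing x x = 0 -> x = 0.
Proof.
rewrite pairingE => /eqP; rewrite psumr_eq0 => [/allP H|i _]; last exact: mulr_ge0_le0 || by rewrite -expr2 sqr_ge0.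
apply/rowP => i; rewrite mxE; have := H i (mem_index_enum _).
by rewrite mulf_eq0 orbb => /eqP.
Qed.

End Pair.

Section Decomp.
Variable R : realType.
Variable n : nat.
Variable I : finType.
Variable c : I -> 'rV[R]_n.

Definition feas (v : 'rV[R]_n) := forall k, -1 <= pairing (c k) v.
Definition inact (v : 'rV[R]_n) : {set I} := finset (fun k => pairing (c k) v != -1).

Lemma step v f : feas v -> (forall k, pairing (c k) v = -1 -> pairing (c k) f = 0) ->
  (exists k, pairing (c k) f < 0) ->
  exists2 t, 0 < t & feas (v + t *: f) /\ inact (v + t *: f) \proper inact v.
Proof.
move=> fv act [k1 Hk1].
pose tk k := (pairing (c k) v + 1) / (- pairing (c k) f).
have [k0 Jk0 Hmin] := @arg_minP _ R I k1 (fun k => pairing (c k) f < 0) tk Hk1.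
have inJ k : pairing (c k) f < 0 -> -1 < pairing (c k) v.
  move=> Hk; rewrite lt_def fv andbT; apply/eqP => E.
  by move: Hk; rewrite (act k E) ltxx.
have tpos k : pairing (c k) f < 0 -> 0 < tk k.
  move=> Hk; rewrite /tk divr_gt0 // ?oppr_gt0 //.
  by rewrite -(opprK 1) subr_gt0 inJ.
exists (tk k0); first exact: tpos.
have Ev k : pairing (c k) (v + tk k0 *: f) = pairing (c k) v + tk k0 * pairing (c k) f.
  by rewrite pairingDr pairingZr.
have E0 : pairing (c k0) (v + tk k0 *: f) = -1.
  rewrite Ev /tk; field; by rewrite ltr0_neq0.
have tk0 := tpos k0 Jk0.
split.
  move=> k; rewrite Ev; have [Hk|Hk] := ltP (pairing (c k) f) 0.
    have := Hmin k Hk; rewrite {2}/tk ler_pdivlMr ?oppr_gt0 // mulrN => H.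
    lra.
  have := fv k; have := mulr_ge0 (ltW tk0) Hk; lra.
apply/properP; split.

  apply/fintype.subsetP => k; rewrite !inE; apply: contra => /eqP E.
  by rewrite Ev E (act k E) mulr0 addr0.
exists k0; rewrite !inE ?E0 ?eqxx //; first by rewrite gt_eqF // inJ.
Qed.

Lemma decomp (Pr : 'rV[R]_n -> Prop) :
  (forall e, e != 0 -> exists k, pairing (c k) e < 0) ->
  (forall x y (l : R), Pr x -> Pr y -> 0 <= l -> l <= 1 -> Pr (l *: x + (1 - l) *: y)) ->
  (forall v, feas v -> (forall e, (forall k, pairing (c k) v = -1 -> pairing (c k) e = 0) -> e = 0) -> Pr v) ->
  forall v, feas v -> Pr v.
Proof.
move=> bnd cvx vert.
have main : forall N v, #|inact v| = N -> feas v -> Pr v.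
  elim/ltn_ind => N IH v eN fv.
  have [H|H] := pselect (forall e, (forall k, pairing (c k) v = -1 -> pairing (c k) e = 0) -> e = 0).
    exact: vert.
  have [e He] := not_all_ex_not _ _ H.
  have [act ne] := imply_to_and _ _ He.
  have ne0 : e != 0 by apply/eqP.
  have [t1 t1p [f1 p1]] := step fv act (bnd e ne0).
  have act' : forall k, pairing (c k) v = -1 -> pairing (c k) (- e) = 0.
    by move=> k /act; rewrite pairingNr => ->; rewrite oppr0.
  have ne0' : - e != 0 by rewrite oppr_eq0.
  have [t2 t2p [f2 p2]] := step fv act' (bnd (- e) ne0').
  have c1 : (#|inact (v + t1 *: e)| < N)%N by rewrite -eN; exact: proper_card.
  have c2 : (#|inact (v + t2 *: - e)| < N)%N by rewrite -eN; exact: proper_card.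
  have H1 := IH _ c1 _ erefl f1.
  have H2 := IH _ c2 _ erefl f2.
  have st : 0 < t1 + t2 by rewrite addr_gt0.
  have := cvx _ _ (t2 / (t1 + t2)) H1 H2.
  have -> : t2 / (t1 + t2) *: (v + t1 *: e) + (1 - t2 / (t1 + t2)) *: (v + t2 *: - e) = v.
    apply/rowP => i; rewrite !mxE.
    by field; rewrite lt0r_neq0.
  apply; first by rewrite divr_ge0 // ltW.
  by rewrite ler_pdivrMr // mul1r lerDr ltW.
by move=> v; exact: main.
Qed.
End Decomp.

Section Conv.
Variable R : realType.
Variable n : nat.
Implicit Types s : seq 'rV[R]_n.

Lemma conv_hullP s x : conv_hull s x <->
  exists w : nat -> R, (forall i, 0 <= w i) /\ \sum_(i < size s) w i = 1 /\
     x = \sum_(i < size s) w i *: s`_i.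
Proof.
split.
  move=> [w [w0 [w1 ->]]].
  exists (fun i => if insub i is Some o then w o else 0); split.
    by move=> i; case: insub.
  by split; [rewrite -w1|]; apply: eq_bigr => i _; rewrite valK.
move=> [w [w0 [w1 ->]]]; exists (fun i => w i); split => //.
Qed.

Lemma conv_hull_mem s v : v \in s -> conv_hull s v.
Proof.
move=> vs; apply/conv_hullP.
exists (fun i => (i == index v s)%:R); split; first by move=> i; case: (_ == _).
split.
  rewrite (bigD1 (Ordinal (etrans (index_mem v s) vs))) //=.
  rewrite eqxx big1 ?addr0 // => i /eqP ne; case: eqP => // E; case: ne; exact: val_inj.
rewrite (bigD1 (Ordinal (etrans (index_mem v s) vs))) //= eqxx scale1r nth_index // big1 ?addr0 //.
by move=> i /eqP ne; case: eqP => [E|]; [case: ne; exact: val_inj|]; rewrite scale0r.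
Qed.

Lemma conv_hull_cvx s x y (l : R) : conv_hull s x -> conv_hull s y -> 0 <= l -> l <= 1 ->
  conv_hull s (l *: x + (1 - l) *: y).
Proof.
move=> /conv_hullP [wx [wx0 [wx1 ->]]] /conv_hullP [wy [wy0 [wy1 ->]]] l0 l1.
apply/conv_hullP; exists (fun i => l * wx i + (1 - l) * wy i); split.
  by move=> i; rewrite addr_ge0 // mulr_ge0 // subr_ge0.
split.
  by rewrite big_split /= -!mulr_sumr wx1 wy1 !mulr1 addrC subrK.
rewrite !scaler_sumr -big_split /=; apply: eq_bigr => i _.
by rewrite [RHS]scalerDl !scalerA.
Qed.

Lemma conv_ineq s x u (a : R) : conv_hull s x ->
  (forall v, v \in s -> a <= pairing v u) -> a <= pairing x u.
Proof.
move=> /conv_hullP [w [w0 [w1 ->]]] H.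
rewrite pairing_suml -[a]mul1r -w1 mulr_suml; apply: ler_sum => i _.
by rewrite pairingZl ler_wpM2l // H // mem_nth.
Qed.

Lemma conv_const s x u (a : R) : conv_hull s x ->
  (forall v, v \in s -> pairing v u = a) -> pairing x u = a.
Proof.
move=> /conv_hullP [w [w0 [w1 ->]]] H.
rewrite pairing_suml -[a]mul1r -w1 mulr_suml; apply: eq_bigr => i _.
by rewrite pairingZl H // mem_nth.
Qed.

Lemma conv_min s x u : conv_hull s x -> exists2 v, v \in s & pairing v u <= pairing x u.
Proof.
move=> hx; have [w [w0 [w1 _]]] := iffLR (conv_hullP _ _) hx.
have sz : (0 < size s)%N.
  move: w1; case: s hx => [|a l] hx //=; rewrite big_ord0 => /eqP; rewrite eq_sym oner_eq0.
  by [].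
have [i0 _ Hmin] := @arg_minP _ R _ (Ordinal sz) xpredT (fun i : 'I_(size s) => pairing s`_i u) isT.
exists s`_i0; first exact: mem_nth.
apply: conv_ineq hx _ => v vs.
have := Hmin (Ordinal (etrans (index_mem v s) vs)) isT; rewrite /= nth_index //.
Qed.
End Conv.

Section Img.
Variable R : realType.
Variables n p : nat.
Variable A : 'M[R]_(n, p).

Lemma pairing_mul (x : 'rV[R]_n) (v : 'rV[R]_p) : pairing (x *m A) v = pairing x (v *m A^T).
Proof. by rewrite /pairing trmx_mul trmxK mulmxA. Qed.

Lemma nth_mapA (s : seq 'rV[R]_n) i : (i < size s)%N -> (map (mulmx^~ A) s)`_i = s`_i *m A.
Proof. by move=> hi; rewrite (@nth_map _ 0 _ 0 (mulmx^~ A) i s hi). Qed.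

Lemma conv_image s x : conv_hull s x -> conv_hull (map (mulmx^~ A) s) (x *m A).
Proof.
move=> /conv_hullP [w [w0 [w1 ->]]]; apply/conv_hullP; exists w; rewrite size_map; split => //.
split => //; rewrite mulmx_suml; apply: eq_bigr => i _.
by rewrite nth_mapA // scalemxAl.
Qed.

Lemma conv_image_inv s y : conv_hull (map (mulmx^~ A) s) y -> exists2 x, conv_hull s x & y = x *m A.
Proof.
move=> /conv_hullP [w [w0 [w1 ->]]]; exists (\sum_(i < size s) w i *: s`_i).
  by apply/conv_hullP; exists w; rewrite -(size_map (mulmx^~ A)).
rewrite mulmx_suml; move: w1; rewrite size_map => _; apply: eq_bigr => i _.
by rewrite nth_mapA // scalemxAl.
Qed.
End Img.

Section Lin.
Variable R : realType.
Variables n p : nat.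
Variable A : 'M[R]_(n, p).

Lemma surj_full : (forall y : 'rV[R]_p, exists x, y = x *m A) -> row_full A.
Proof.
move=> surj; rewrite -sub1mx; apply/row_subP => i.
have [x ->] := surj (row i 1%:M); exact: submxMl.
Qed.

Lemma trfree : row_full A -> row_free A^T.
Proof. by rewrite /row_free /row_full mxrank_tr. Qed.

Lemma ker_sub (u : 'rV[R]_n) : (forall x, x *m A = 0 -> pairing x u = 0) -> (u <= A^T)%MS.
Proof.
move=> H; rewrite submxE; apply/eqP/rowP => j; rewrite !mxE.
set C := cokermx A^T.
have CA : C^T *m A = 0 by rewrite -[A in _ *m A]trmxK -trmx_mul mulmx_coker trmx0.
have := H (row j C^T); rewrite -row_mul CA row0 => /(_ erefl).
rewrite pairingE => E; rewrite -[RHS]E; apply: eq_bigr => k _; by rewrite !mxE mulrC. Qed.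
End Lin.

Section Norm.
Variable R : realType.

Lemma entry_le a b (x : 'M[R]_(a, b)) i j : `|x i j| <= `|x|.
Proof.
rewrite (_ : `|x| = mx_norm x) // mx_normrE.
exact: (le_bigmax _ (fun ij : 'I_a * 'I_b => `|x ij.1 ij.2|) (i, j)).
Qed.

Lemma norm_le_entries a b (x : 'M[R]_(a, b)) (c : R) : 0 <= c -> (forall i j, `|x i j| <= c) -> `|x| <= c.
Proof.
move=> c0 H; rewrite (_ : `|x| = mx_norm x) // mx_normrE.
by apply: bigmax_le => // ij _; apply: H.
Qed.

Lemma mul_norm_le p n (B : 'M[R]_(p, n)) (z : 'rV[R]_p) :
  `|z *m B| <= (\sum_k \sum_j `|B k j|) * `|z|.
Proof.
apply: norm_le_entries; first by rewrite mulr_ge0 // sumr_ge0 // => k _; rewrite sumr_ge0.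
move=> i j; rewrite mxE (le_trans (ler_norm_sum _ _ _)) //.
rewrite mulr_suml; apply: ler_sum => k _.
rewrite normrM (@le_trans _ _ (`|B k j| * `|z|)) //.
  by rewrite mulrC; apply: ler_wpM2l => //; exact: (entry_le z).
apply: ler_wpM2r => //; rewrite (bigD1 j) //= lerDl sumr_ge0 //.
Qed.
End Norm.

Section Interior.
Variable R : realType.
Import numFieldNormedType.Exports.

Lemma interior_image n p (A : 'M[R]_(n, p)) (D : set 'rV[R]_n) m :
  row_full A -> interior D m -> interior (lin_image A D) (m *m A).
Proof.
move=> fA; rewrite /interior => hD.
have [e e0 He] := iffLR (@nbhs_normP R _ m D) hD.
apply: (iffRL (@nbhs_normP R _ (m *m A) _)).
set B := pinvmx A.
set K := \sum_k \sum_j `|B k j|.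
have K0 : 0 <= K by rewrite sumr_ge0 // => k _; rewrite sumr_ge0.
exists (e / (K + 1)); first by rewrite /= divr_gt0 // ltr_wpDl.
move=> y Hy.
exists (m - (m *m A - y) *m B); last first.
  by rewrite mulmxBl -mulmxA mulVpmx // mulmx1 opprB addrC subrK.
apply: He; rewrite /ball_ /=.
set z := m *m A - y.
have -> : m - (m - z *m B) = z *m B by rewrite opprB addrC subrK.
move: Hy; rewrite /ball_ /= -/z ltr_pdivlMr ?ltr_wpDl // => Hy.
apply: le_lt_trans (mul_norm_le B z) _; rewrite -/K.
apply: le_lt_trans Hy; rewrite mulrC; apply: ler_wpM2l => //; by rewrite lerDl.
Qed.
End Interior.

Section Main.
Variable R : realType.
Import numFieldNormedType.Exports.
Variables d n : nat.
Variables (SP SQ : seq 'rV[R]_d) (p m : 'rV[R]_d) (A : 'M[R]_(d, n)).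
Variable U : seq 'rV[R]_d.
Let P := conv_hull SP.
Let Q := conv_hull SQ.
Let D := minkowski_sum P Q.
Hypothesis Pp : P p.
Hypothesis hker : forall x : 'rV[R]_d, x *m A = 0 <-> lin_span (translate P p) x.
Hypothesis fT : row_free A^T.
Hypothesis ePol : polar_at D m = conv_hull U.
Hypothesis hint : interior D m.

Definition cc (ij : 'I_(size SP) * 'I_(size SQ)) := SP`_ij.1 + SQ`_ij.2 - m.

Lemma inSP (v : 'rV[R]_d) : v \in SP -> exists i : 'I_(size SP), SP`_i = v.
Proof. by move=> vs; exists (Ordinal (etrans (index_mem v SP) vs)); rewrite nth_index. Qed.
Lemma inSQ (v : 'rV[R]_d) : v \in SQ -> exists i : 'I_(size SQ), SQ`_i = v.
Proof. by move=> vs; exists (Ordinal (etrans (index_mem v SQ) vs)); rewrite nth_index. Qed.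

Lemma D_min x u : D x -> exists ij, pairing (cc ij) u <= pairing (x - m) u.
Proof.
move=> [a [b [Pa [Qb ->]]]].
have [sp sps Hp] := conv_min u Pa; have [sq sqs Hq] := conv_min u Qb.
have [i Ei] := inSP sps; have [j Ej] := inSQ sqs.
exists (i, j); rewrite /cc /= Ei Ej !pairingBl !pairingDl.
by rewrite lerB // lerD.
Qed.

Lemma cc_D ij : D (cc ij + m).
Proof.
exists SP`_ij.1, SQ`_ij.2; split; first exact/conv_hull_mem/mem_nth.
split; first exact/conv_hull_mem/mem_nth.
by rewrite /cc subrK.
Qed.

Lemma polar_feas u : (forall ij, -1 <= pairing (cc ij) u) -> polar_at D m u.
Proof.
move=> H x Dx; have [ij Hij] := D_min u Dx; exact: le_trans (H ij) Hij.
Qed.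

Lemma feas_polar u : polar_at D m u -> forall ij, -1 <= pairing (cc ij) u.
Proof. by move=> H ij; have := H _ (cc_D ij); rewrite addrK. Qed.


Lemma pairing_self_gt0 (u : 'rV[R]_d) : u != 0 -> 0 < pairing u u.
Proof.
move=> u0; rewrite lt_def; apply/andP; split.
  by apply/eqP => /pairing_self_eq0 /eqP; rewrite (negbTE u0).
by rewrite pairingE sumr_ge0 // => i _; rewrite -expr2 sqr_ge0.
Qed.

Lemma bnd_u (u : 'rV[R]_d) : u != 0 -> exists ij, pairing (cc ij) u < 0.
Proof.
move=> u0.
have [e e0 He] := iffLR (@nbhs_normP R _ m D) hint.
set eps := e / (`|u| + 1).
have eps0 : 0 < eps by rewrite divr_gt0 // ltr_wpDl.
have Dz : D (m - eps *: u).
  apply: He; rewrite /ball_ /= opprB addrC subrK normrZ gtr0_norm //.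
  rewrite /eps mulrAC ltr_pdivrMr ?ltr_wpDl // ltr_pM2l //.
  by rewrite ltrDl.
have [ij H] := D_min u Dz; exists ij; apply: le_lt_trans H _.
rewrite addrAC subrr add0r pairingNl pairingZl oppr_lt0 mulr_gt0 //.
exact: pairing_self_gt0.
Qed.

Lemma w_constP (v : 'rV[R]_n) (i : 'I_(size SP)) :
  pairing SP`_i (v *m A^T) = pairing p (v *m A^T).
Proof.
have H : (SP`_i - p) *m A = 0.
  apply/hker; exists 1%N, (fun _ => 1), (fun _ => SP`_i - p); split.
    move=> _; exists SP`_i => //; exact/conv_hull_mem/mem_nth.
  by rewrite big_ord1 scale1r.
apply/eqP; rewrite -subr_eq0 -pairingBl -pairing_mul H pairing0l //.
Qed.

Lemma kills_ker (u : 'rV[R]_d) (i0 : 'I_(size SP)) :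
  (forall i : 'I_(size SP), pairing SP`_i u = pairing SP`_i0 u) ->
  forall x, x *m A = 0 -> pairing x u = 0.
Proof.
move=> H x /hker [k [c [vv [Hv ->]]]].
rewrite pairing_suml big1 // => i _; rewrite pairingZl.
have [y Py <-] := Hv i.
have Hc z : P z -> pairing z u = pairing SP`_i0 u.
  move=> Pz; apply: conv_const Pz _ => s ss.
  by have [j <-] := inSP ss; exact: H.
by rewrite pairingBl (Hc _ Py) (Hc _ Pp) subrr mulr0.
Qed.

Lemma vert_in (v : 'rV[R]_n) :
  (forall ij, -1 <= pairing (cc ij *m A) v) ->
  (forall e, (forall ij, pairing (cc ij *m A) v = -1 -> pairing (cc ij *m A) e = 0) -> e = 0) ->
  (exists ij, pairing (cc ij *m A) v = -1) ->
  exists2 u, u \in U & u = v *m A^T.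
Proof.
move=> feas vert [ij0 act0].
set w := v *m A^T.
have cw ij : pairing (cc ij *m A) v = pairing (cc ij) w by rewrite pairing_mul.
have wv : forall u, (forall ij, pairing (cc ij) w = -1 -> pairing (cc ij) u = 0) -> u = 0.
  move=> u Hu.
  have act i : pairing (cc (i, ij0.2)) w = -1.
    by rewrite -act0 cw /cc /= !pairingBl !pairingDl /w !w_constP.
  have eq (i : 'I_(size SP)) : pairing SP`_i u = pairing SP`_(ij0.1) u.
    have := Hu _ (act i); have := Hu _ (act ij0.1).
    rewrite /cc /= !pairingBl !pairingDl; lra.
  have sub := ker_sub (kills_ker eq).
  set e := u *m pinvmx A^T.
  have ue : u = e *m A^T by rewrite mulmxKpV.
  have e0 : e = 0.
    apply: vert => ij; rewrite cw => a.
    by rewrite pairing_mul -ue; apply: Hu.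
  by rewrite ue e0 mul0mx.
have wpol : polar_at D m w by apply: polar_feas => ij; rewrite -cw.
have Upol k : polar_at D m U`_k.
  case: (ltnP k (size U)) => hk; first by rewrite ePol; exact/conv_hull_mem/mem_nth.
  by rewrite nth_default // => x _; rewrite pairing0r lerN10.
move: wpol; rewrite ePol => /conv_hullP [lam [l0 [l1 wE]]].
have tight ij (k : 'I_(size U)) : pairing (cc ij) w = -1 -> 0 < lam k ->
    pairing (cc ij) U`_k = -1.
  move=> a lk.
  have S : \sum_(k < size U) lam k * (pairing (cc ij) U`_k + 1) = 0.
    move: a; rewrite wE pairingC pairing_suml => a.
    rewrite (eq_bigr (fun k : 'I_(size U) => pairing (lam k *: U`_k) (cc ij) + lam k)).
      by rewrite big_split /= a l1 addNr.
    by move=> i _; rewrite pairingZl mulrDr mulr1 pairingC.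
  move/eqP: S; rewrite psumr_eq0 => [/allP /(_ k (mem_index_enum _))|i _].
    rewrite mulf_eq0 (gt_eqF lk) /= addr_eq0 => /eqP //.
  by rewrite mulr_ge0 // -[0](addNr 1) lerD2r (feas_polar (Upol i)).
have [k lk] : exists k : 'I_(size U), 0 < lam k.
  case: (pselect (exists k : 'I_(size U), 0 < lam k)) => // H; exfalso.
  move: l1; rewrite big1 => [/eqP|k _]; first by rewrite eq_sym oner_eq0.
  apply/eqP; rewrite eq_le l0 andbT leNgt; apply/negP => lk; by apply: H; exists k.
have : U`_k - w = 0.
  by apply: wv => ij a; rewrite pairingBr (tight ij k a lk) a subrr.
move/eqP; rewrite subr_eq0 => /eqP E.
by exists (U`_k) => //; apply: mem_nth.
Qed.
End Main.

Theorem corollary6p6 (R : realType) (d : nat) (P Q : set 'rV[R]_d) :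
  lattice_polytope (@Zlattice R d) P ->
  lattice_polytope (@Zlattice R d) Q ->
  (exists m, reflexive_wrt (@Zlattice R d) (minkowski_sum P Q) m) ->
  forall p : 'rV[R]_d, Zlattice p -> P p ->
  forall (n : nat) (A : 'M[R]_(d, n)),
    (forall x : 'rV[R]_d, x *m A = 0 <-> lin_span (translate P p) x) ->
    (forall y : 'rV[R]_n, exists x : 'rV[R]_d, y = x *m A) ->
  exists m' : 'rV[R]_n,
    reflexive_wrt (lin_image A (@Zlattice R d)) (lin_image A (minkowski_sum P Q)) m'.
Proof.
move=> [SP [_ eP]] [SQ [_ eQ]] [m [[S0 [hS0 eD]] hm hint [U [hU ePol]]]] p hp Pp n A hker surj.
subst P Q.
have fA := surj_full surj.
have fT := trfree fA.
exists (m *m A); split.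
- exists (map (mulmx^~ A) S0); split.
    by move=> v /mapP [x xs ->]; exists x => //; exact: hS0.
  apply/seteqP; split => y.
    by move=> [x Dx <-]; rewrite eD in Dx; exact: conv_image.
  by move=> /conv_image_inv [x hx ->]; exists x => //; rewrite eD.
- by exists m.
- exact: interior_image.
- set V := 0 :: [seq u *m pinvmx A^T | u <- U & (u <= A^T)%MS].
  exists V; split.
    move=> v; rewrite inE => /orP [/eqP -> | /mapP [u]].
      by move=> l _; exists 0; rewrite pairing0r.
    rewrite mem_filter => /andP [uA uU] ->.
    move=> l [x hx <-]; rewrite pairing_mul mulmxKpV //; exact: hU uU x hx.
  apply/seteqP; split => y.
    move=> hy.
    apply: (@decomp R n _ (fun ij => @cc R d SP SQ m ij *m A)).
    + move=> e e0.
      have ne : e *m A^T != 0.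
        apply/eqP => E; move: e0; rewrite (row_free_inj fT (etrans E (esym (mul0mx _ A^T)))).
        by rewrite eqxx.
      have [ij H] := bnd_u hint ne; exists ij; by rewrite pairing_mul.
    + by move=> x z l; exact: conv_hull_cvx.
    + move=> v fv vv.
      case: (pselect (exists ij, pairing (@cc R d SP SQ m ij *m A) v = -1)) => [ex|nex].
        have [u uU uv] := vert_in Pp hker ePol fv vv ex.
        have uA : (u <= A^T)%MS by rewrite uv submxMl.
        apply: conv_hull_mem; rewrite inE; apply/orP; right; apply/mapP; exists u.
          by rewrite mem_filter uU uA.
        by apply: (row_free_inj fT); rewrite mulmxKpV.
      have -> : v = 0 by apply: vv => ij a; exfalso; apply: nex; exists ij.
      by apply: conv_hull_mem; exact: mem_head.
    + move=> ij; have := hy ((@cc R d SP SQ m ij + m) *m A).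
      rewrite -mulmxBl addrK; apply; exists (@cc R d SP SQ m ij + m) => //.
      exact: cc_D.
  move=> hy x [x' Dx <-]; rewrite pairingC; apply: conv_ineq hy _ => v.
  rewrite inE => /orP [/eqP -> | /mapP [u]].
    by rewrite pairing0l lerN10.
  rewrite mem_filter => /andP [uA uU] ->.
  rewrite pairingC -mulmxBl pairing_mul mulmxKpV //.
  have := conv_hull_mem uU; rewrite -ePol; exact.
Qed.
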